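(* Let $\mathcal{D}$ be any distribution over a domain $X$ and $c$ any concept, and let $\mathcal{D}_c$ be the distribution of $(\mathbf{x}, c(\mathbf{x}))$ where $\mathbf{x} \sim \mathcal{D}$. Suppose a sample $\mathbf{S}'_{\mathrm{big}}$ of $nk$ labeled points is generated by an $\eta$-rate nasty adversary with clean distribution $\mathcal{D}_c$: a clean sample $\mathbf{S}_{\mathrm{big}} \sim (\mathcal{D}_c)^{nk}$ is drawn, the adversary chooses a set $\mathbf{Z} \subseteq [nk]$ of indices (possibly depending on the clean sample) whose size $|\mathbf{Z}|$ has marginal distribution $\mathrm{Bin}(nk,\eta)$, and replaces the examples at indices in $\mathbf{Z}$ by arbitrary labeled examples. The sample $\mathbf{S}'_{\mathrm{big}}$ is then split into $k$ groups $(\mathbf{S}^{(1)})', \ldots, (\mathbf{S}^{(k)})'$ by drawing a uniform random permutation $\boldsymbol{\sigma}:[nk]\to[nk]$, forming $\boldsymbol{\sigma}(\mathbf{S}'_{\mathrm{big}})$ with $i$-th element $(\mathbf{S}'_{\mathrm{big}})_{\boldsymbol{\sigma}(i)}$, and letting $(\mathbf{S}^{(1)})'$ be its first $n$ elements, $(\mathbf{S}^{(2)})'$ the next $n$ elements, and so on. Then there exist random variables $\mathbf{S}^{(1)}, \ldots, \mathbf{S}^{(k)}$ and $\mathbf{z}_1, \ldots, \mathbf{z}_k$ (jointly defined with this process) with the following properties: 1. The marginal distribution of $\mathbf{S}^{(1)}, \ldots, \mathbf{S}^{(k)}$ is that of $k$ independent draws from $(\mathcal{D}_c)^n$. 2.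 The marginal distribution of $\mathbf{z}_1, \ldots, \mathbf{z}_k$ is that of $k$ independent draws from $\mathrm{Bin}(n, \eta)$. 3. With probability $1$, for all $i \in [k]$, the number of coordinates on which $\mathbf{S}^{(i)}$ and $(\mathbf{S}^{(i)})'$ differ is at most $\mathbf{z}_i$.
   Context: This concerns the success-probability amplification procedure for learners under nasty noise, which randomly permutes a corrupted size-$nk$ sample and splits it into $k$ groups of size $n$, running a base learner on each group. In the $\eta$-rate nasty noise model, a clean labeled sample is drawn i.i.d., then the adversary (seeing the whole clean sample) chooses a subset of indices to corrupt whose size is marginally $\mathrm{Bin}(\text{sample size},\eta)$, and replaces those examples arbitrarily. No assumption is made about the correlation between the $\mathbf{S}^{(i)}$ and the $\mathbf{z}_i$. *)

(* Defs.v *)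
From HB Require Import structures.
From mathcomp Require Import all_boot all_order all_algebra.
From mathcomp Require Import fingroup perm.
From mathcomp Require Import all_classical all_reals all_analysis.
From mathcomp Require Import zify.
Set Implicit Arguments. Unset Strict Implicit. Unset Printing Implicit Defensive.
Import Order.TTheory GRing.Theory Num.Theory.
Local Open Scope classical_set_scope.
Local Open Scope ring_scope.

Definition Dc {R : realType} {d : measure_display} {X : measurableType d}
  (D : probability X R) (c : X -> bool) (A : set (X * bool)) : R :=
  fine (D ((fun x => (x, c x)) @^-1` A)).

(* Probability mass function of Bin(n, eta) at m (= 0 when m > n). *)
Definition binom_pmf {R : realType} (n : nat) (eta : R) (m : nat) : R :=
  'C(n, m)%:R * eta ^+ m * (1 - eta) ^+ (n - m).

Definition iid_Dc {R : realType} {d : measure_display} {X : measurableType d}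
  {dO : measure_display} {Omega : measurableType dO} (Pr : probability Omega R)
  (D : probability X R) (c : X -> bool) (I : finType) (S : I -> Omega -> X * bool) :=
  (forall i, measurable_fun setT (S i)) /\
  (forall A : I -> set (X * bool), (forall i, measurable (A i)) ->
     Pr [set w | forall i, A i (S i w)] = (\prod_i Dc D c (A i))%:E).

Lemma block_index_subproof (n k : nat) (i : 'I_k) (j : 'I_n) : (i * n + j < n * k)%N.
Proof. have := ltn_ord i; have := ltn_ord j; nia. Qed.

(* Position (0-based) of the j-th element of the i-th group of size n. *)
Definition block_index (n k : nat) (i : 'I_k) (j : 'I_n) : 'I_(n * k) :=
  Ordinal (block_index_subproof i j).

(* Main.v *)
Require Import Defs.
From HB Require Import structures.
From mathcomp Require Import all_boot all_order all_algebra.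
From mathcomp Require Import fingroup perm.
From mathcomp Require Import all_classical all_reals all_analysis.
From mathcomp.algebra_tactics Require Import ring.
Import Order.TTheory GRing.Theory Num.Theory.

Set Implicit Arguments. Unset Strict Implicit. Unset Printing Implicit Defensive.
Local Open Scope nat_scope.
Lemma card_sumb (T : finType) (P : pred T) : #|[set x | P x]| = \sum_x (P x : nat).
Proof.
rewrite -sum1_card big_mkcond /=; apply: eq_bigr => x _; rewrite inE; by case: (P x).
Qed.

Lemma perm_move (T : finType) (B0 B1 : {set T}) : #|B0| = #|B1| ->
  exists t : {perm T}, forall x, (t x \in B1) = (x \in B0).
Proof.
move=> HB.
pose e0 := enum B0 ++ enum (~: B0); pose e1 := enum B1 ++ enum (~: B1).
have mem0 : forall x, x \in e0 by move=> x; rewrite mem_cat !mem_enum inE; case: (x \in B0).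
have sz0 : size e0 = #|T| by rewrite size_cat -!cardE cardsC.
have sz1 : size e1 = #|T| by rewrite size_cat -!cardE cardsC.
have u1 : uniq e1.
  rewrite cat_uniq !enum_uniq /= andbT; apply/hasPn => x; rewrite !mem_enum inE.
  by move=> /negbTE ->.
have idx0 : forall x, (x \in B0) = (index x e0 < #|B0|).
  move=> x; rewrite index_cat mem_enum; case: ifP => Hx.
    by rewrite cardE index_mem mem_enum.
  by rewrite -cardE ltnNge leq_addr.
pose f x := nth x e1 (index x e0).
have finj : injective f.
  move=> x y; rewrite /f => Hxy.
  have : index x e0 = index y e0.
    apply/eqP; rewrite -(nth_uniq x _ _ u1) ?sz1 -?sz0 ?index_mem //.
    rewrite Hxy; apply/eqP; apply: set_nth_default; by rewrite sz1 -sz0 index_mem.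
  by move=> /(congr1 (nth x e0)); rewrite nth_index // (set_nth_default y) ?index_mem // nth_index.
exists (perm finj) => x; rewrite permE /f idx0 nth_cat -cardE -HB.
case: ifP => Hi.
  have : nth x (enum B1) (index x e0) \in enum B1 by apply: mem_nth; rewrite -cardE -HB.
  by rewrite mem_enum.
have : nth x (enum (~: B1)) (index x e0 - #|B0|) \in enum (~: B1).
  apply: mem_nth; rewrite -cardE.
  have := index_mem x e0; rewrite mem0 sz0 -(cardsC B1) HB => H.
  rewrite ltn_subLR //; by rewrite leqNgt -HB Hi.
by rewrite mem_enum inE => /negbTE.
Qed.

Section Counting.
Variables (K J T : finType) (b : K -> J -> T).
Hypothesis bb : bijective (fun p : K * J => b p.1 p.2).

Definition cnt (s : {perm T}) (B : {set T}) (i : K) := #|[set j | s (b i j) \in B]|.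
Definition cond (m : K -> nat) s B := [forall i, cnt s B i == m i].
Definition cc m B := #|[set s : {perm T} | cond m s B]|.

Lemma b_inj i i' j j' : b i j = b i' j' -> i = i' /\ j = j'.
Proof.
move=> H; have [g gK _] := bb.
have := gK (i, j); have := gK (i', j'); rewrite /= H => -> [-> ->]; by [].
Qed.

Lemma cc_inv m (B0 B1 : {set T}) : #|B0| = #|B1| -> cc m B0 = cc m B1.
Proof.
move=> /esym /perm_move [t Ht]; rewrite /cc.
rewrite -(card_preimset _ (mulIg t)); apply: eq_card => s; rewrite !inE.
apply: eq_forallb => i; rewrite /cnt.
rewrite (_ : [set j | (s * t)%g (b i j) \in B0] = [set j | s (b i j) \in B1]) //.
by apply/setP => j; rewrite !inE permM Ht.
Qed.

Lemma cnt_pre (s : {perm T}) (B : {set T}) i : cnt s B i = cnt 1 (s @^-1: B) i.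
Proof.
rewrite /cnt (_ : [set j | s (b i j) \in B] = [set j | (1%g : {perm T}) (b i j) \in s @^-1: B]) //.
by apply/setP => j; rewrite !inE perm1.
Qed.

Lemma card_B (B : {set T}) : #|B| = \sum_i cnt 1 B i.
Proof.
rewrite /cnt; under eq_bigr => i _ do rewrite card_sumb.
rewrite pair_big /=.
rewrite -sum1_card (reindex (fun p : K * J => b p.1 p.2)) /=; last first.
  by apply: onW_bij.
rewrite big_mkcond /=; apply: eq_bigr => p _; rewrite perm1; by case: (_ \in _).
Qed.

Lemma preimset_inj (s : {perm T}) : injective (fun B : {set T} => s @^-1: B).
Proof.
move=> B1 B2 /setP H; apply/setP => x; have := H (s^-1%g x); by rewrite !inE permKV.
Qed.

Lemma cc_sum m M : \sum_(B : {set T} | #|B| == M) cc m B =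
  #|{perm T}| * #|[set B : {set T} | (#|B| == M) && cond m 1 B]|.
Proof.
rewrite /cc; under eq_bigr => B _ do rewrite card_sumb.
rewrite exchange_big /= -sum_nat_const; apply: eq_bigr => s _.
rewrite -big_mkcondr /=.
rewrite -(card_preimset _ (@preimset_inj s)) card_sumb big_mkcond /=.
apply: eq_bigr => B _; rewrite !inE card_preimset; last exact: perm_inj.
rewrite /cond; case: (#|B| == M) => //=.
rewrite (@eq_forallb _ _ (fun i => cnt 1 (s @^-1: B) i == m i)); first by case: [forall _, _].
by move=> i; rewrite cnt_pre.
Qed.

Lemma cond_card m (B : {set T}) : cond m 1 B -> #|B| = \sum_i m i.
Proof.
move=> /forallP H; rewrite (card_B B); apply: eq_bigr => i _; exact/eqP.
Qed.

Lemma q_count m : #|[set B : {set T} | cond m 1 B]| = \prod_i 'C(#|J|, m i).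
Proof.
have [g gK Kg] := bb.
pose psi (F : {ffun K -> {set J}}) : {set T} := [set x | (g x).2 \in F (g x).1].
pose phi (B : {set T}) : {ffun K -> {set J}} := [ffun i => [set j | b i j \in B]].
have psi_b F i j : (b i j \in psi F) = (j \in F i).
  by rewrite inE (gK (i, j)).
have bpsi : bijective psi.
  exists phi.
    move=> F; apply/ffunP => i; apply/setP => j; by rewrite ffunE inE psi_b.
  move=> B; apply/setP => x; rewrite !inE ffunE inE.
  by have := Kg x; case: (g x) => i j /= ->.
have -> : #|[set B : {set T} | cond m 1 B]| = #|psi @^-1: [set B : {set T} | cond m 1 B]|.
  by rewrite on_card_preimset //; apply: onW_bij.
have -> : #|psi @^-1: [set B : {set T} | cond m 1 B]| =
    #|family (fun i => [pred A : {set J} | #|A| == m i])|.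
  apply: eq_card => F; rewrite !inE; apply/forallP/familyP => H i.
    have := H i; rewrite /cnt inE.
    rewrite (_ : [set j | (1%g : {perm T}) (b i j) \in psi F] = F i) //.
    by apply/setP => j; rewrite inE perm1 psi_b.
  have := H i; rewrite /cnt inE.
  rewrite (_ : [set j | (1%g : {perm T}) (b i j) \in psi F] = F i) //.
  by apply/setP => j; rewrite inE perm1 psi_b.
rewrite card_family foldrE big_map big_enum /=.
apply: eq_bigr => i _; rewrite -card_draws; apply: eq_card => A; by rewrite inE.
Qed.

Lemma cc_formula m (B : {set T}) :
  cc m B * 'C(#|T|, #|B|) =
  #|{perm T}| * (if #|B| == \sum_i m i then \prod_i 'C(#|J|, m i) else 0).
Proof.
have Hs := cc_sum m #|B|.
rewrite (eq_bigr (fun _ => cc m B)) in Hs; last by move=> B' /eqP HB'; apply: cc_inv.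
rewrite sum_nat_const in Hs.
rewrite (_ : #|_| = 'C(#|T|, #|B|)) in Hs; last by rewrite -card_draws; apply: eq_card => A; rewrite inE.
rewrite mulnC Hs; congr (_ * _).
case: eqP => HM.
  rewrite -q_count; apply: eq_card => A; rewrite !inE.
  case H: (cond m 1 A); rewrite ?andbT ?andbF //.
  by rewrite (cond_card H) HM eqxx.
apply/eqP; rewrite cards_eq0; apply/eqP/setP => A; rewrite !inE.
case H: (cond m 1 A); rewrite ?andbT ?andbF //.
by rewrite (cond_card H); apply/eqP => HA; apply: HM.
Qed.

End Counting.

Local Open Scope classical_set_scope.
Local Open Scope ring_scope.
Lemma fsbigT_big (R : Type) (idx : R) (op : Monoid.com_law idx) (I : finType) (F : I -> R) :
  \big[op/idx]_(i \in [set: I]) F i = \big[op/idx]_(i : I) F i.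
Proof.
rewrite (fsbigE (enum I)) ?enum_uniq //.
  rewrite big_enum_cond /=.
  by apply: eq_bigl => i; rewrite in_setT.
by move=> i _; rewrite mem_enum.
Qed.

Lemma part_sum d (T : measurableType d) (R : realType) (P : probability T R)
  (I : finType) (f : T -> I) (E : set T) :
  (forall i, measurable (E `&` [set w | f w = i])) ->
  P E = (\sum_(i : I) P (E `&` [set w | f w = i]))%E.
Proof.
move=> mE.
have -> : P E = P (\bigcup_(i in [set: I]) (E `&` [set w | f w = i])).
  congr (P _); rewrite eqEsubset; split => [w Ew|w [i _ []]] //; by exists (f w).
rewrite measure_fin_bigcup //.
- by rewrite -fsbigT_big.
- exact: finite_finset.
- by move=> i j _ _ [w [[_ Hi] [_ Hj]]]; rewrite -Hi -Hj.
Qed.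

Lemma sum_by_card (R : realType) (T : finType) (F : {set T} -> R) (f : nat -> R) :
  \sum_(B : {set T}) f #|B| * F B =
  \sum_(M < #|T|.+1) f M * \sum_(B : {set T} | #|B| == M) F B.
Proof.
under [RHS]eq_bigr => M _ do rewrite mulr_sumr big_mkcond /=.
rewrite exchange_big /=; apply: eq_bigr => B _.
have HB : (#|B| < #|T|.+1)%N by rewrite ltnS max_card.
rewrite (bigD1 (Ordinal HB)) //= eqxx big1 ?addr0 // => M HM.
case: eqP => // HBM; case/eqP: HM; apply: val_inj => /=; by rewrite HBM.
Qed.

Lemma final_alg (R : realType) (n k : nat) (eta : R) (m : 'I_k -> nat) :
  \sum_(M < (n * k).+1)
    ((if (M : nat) == \sum_i m i then \prod_i 'C(n, m i) else 0)%N%:R / ('C(n * k, M))%:R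
      * binom_pmf (n * k) eta M) = \prod_i binom_pmf n eta (m i).
Proof.
rewrite /binom_pmf.
rewrite (eq_bigr (fun M : 'I_(n * k).+1 =>
  (if (M : nat) == \sum_i m i then \prod_i 'C(n, m i) else 0)%N%:R * eta ^+ M * (1 - eta) ^+ (n * k - M))); last first.
  move=> M _; rewrite !mulrA mulfVK // pnatr_eq0 -lt0n bin_gt0 -ltnS; exact: ltn_ord.
case: (boolP [exists i, n < m i]%N) => [/existsP [i Hi]|].
  rewrite [RHS](bigD1 i) //= bin_small // mul0r !mul0r big1 // => M _.
  case: ifP => _; last by rewrite !mul0r.
  by rewrite (bigD1 i) //= bin_small // mul0n !mul0r.
rewrite negb_exists => /forallP Hm.
have Hle : forall i, (m i <= n)%N by move=> i; have := Hm i; rewrite ltnNge negbK.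
have HMs : (\sum_i m i < (n * k).+1)%N.
  rewrite ltnS; apply: (@leq_trans (\sum_(i < k) n)); first by apply: leq_sum.
  by rewrite sum_nat_const card_ord mulnC.
rewrite (bigD1 (Ordinal HMs)) //= eqxx [X in _ + X]big1 ?addr0; last first.
  move=> M HM; rewrite (_ : ((M : nat) == \sum_i m i) = false) ?mul0r //.
  by apply/eqP => HMM; case/eqP: HM; apply: val_inj.
rewrite big_split big_split /= -natr_prod prodrXr prodrXr.
congr (_ * _ * (1 - eta) ^+ _).
apply/eqP; rewrite -(eqn_add2r (\sum_i m i)) -big_split /= subnK; last first.
  apply: (@leq_trans (\sum_(i < k) n)); first by apply: leq_sum.
  by rewrite sum_nat_const card_ord mulnC.
rewrite (eq_bigr (fun=> n)); last by move=> i _; rewrite subnK.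
by rewrite sum_nat_const card_ord mulnC.
Qed.

Lemma block_bij (n k : nat) : bijective (fun p : 'I_k * 'I_n => block_index p.1 p.2).
Proof.
apply: inj_card_bij; last by rewrite card_prod !card_ord mulnC.
move=> [i j] [i' j'] /(congr1 val) /= H.
have hj : j = j' :> nat.
  by move: (congr1 (modn^~ n) H); rewrite /= !modnMDl !modn_small.
have hi : i = i' :> nat.
  have n0 : (0 < n)%N := leq_ltn_trans (leq0n j) (ltn_ord j).
  by move: (congr1 (divn^~ n) H); rewrite /= !divnMDl // !divn_small // !addn0.
by move: hi hj => /val_inj -> /val_inj ->.
Qed.

Lemma meas_all d (T : measurableType d) d' (U : measurableType d') (I : finType)
  (f : I -> T -> U) (A : I -> set U) :
  (forall p, measurable (A p)) -> (forall p, measurable_fun setT (f p)) ->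
  measurable [set w | forall p, A p (f p w)].
Proof.
move=> mA mf.
have -> : [set w | forall p, A p (f p w)] = \bigcap_(p in [set: I]) (setT `&` f p @^-1` A p).
  rewrite eqEsubset; split => [w H p _|w H p]; first by split; [|apply: H].
  by have [] := H p Logic.I.
apply: fin_bigcap_measurable; first exact: finite_finset.
by move=> p _; apply: mf.
Qed.

Lemma meas_fib d (T : measurableType d) (I : finType) (f : T -> I) (P : I -> Prop) :
  (forall i, measurable [set w | f w = i]) -> measurable [set w | P (f w)].
Proof.
move=> H.
have -> : [set w | P (f w)] = \bigcup_(i in [set i | P i]) [set w | f w = i].
  by rewrite eqEsubset; split => [w Pw|w [i Pi /= ->]] //; exists (f w).
apply: fin_bigcup_measurable; first exact: finite_finset.
by move=> i _; apply: H.
Qed.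

Theorem proposition5p6 (R : realType) (d : measure_display) (X : measurableType d)
  (D : probability X R) (c : X -> bool) (cmeas : measurable_fun setT c)
  (n k : nat) (eta : R) (eta_ge0 : 0 <= eta) (eta_le1 : eta <= 1)
  (dO : measure_display) (Omega : measurableType dO) (Pr : probability Omega R)
  (Sbig : 'I_(n * k) -> Omega -> X * bool)
  (Z : Omega -> {set 'I_(n * k)})
  (Sbig' : 'I_(n * k) -> Omega -> X * bool)
  (sigma : Omega -> {perm 'I_(n * k)})
  (* clean sample S_big ~ (D_c)^(nk) *)
  (Hclean : iid_Dc Pr D c Sbig)
  (* the corrupted index set Z: measurable, with |Z| ~ Bin(nk, eta) *)
  (HZmeas : forall B : {set 'I_(n * k)}, measurable [set w | Z w = B])
  (HZbin : forall m : nat,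
     Pr [set w | #|Z w| = m] = (binom_pmf (n * k) eta m)%:E)
  (* the corrupted sample: measurable, agrees with the clean one outside Z *)
  (HS'meas : forall i, measurable_fun setT (Sbig' i))
  (HS'Z : forall w i, i \notin Z w -> Sbig' i w = Sbig i w)
  (* sigma is a uniform random permutation, independent of (S_big, Z, S'_big) *)
  (Hsigmeas : forall s, measurable [set w | sigma w = s])
  (Hsigma : forall (s : {perm 'I_(n * k)}) (A B : 'I_(n * k) -> set (X * bool))
       (F : set {set 'I_(n * k)}),
     (forall i, measurable (A i)) -> (forall i, measurable (B i)) ->
     Pr [set w | [/\ sigma w = s, (forall i, A i (Sbig i w)), F (Z w)
                   & (forall i, B i (Sbig' i w))]]
     = ((((n * k)`!)%:R^-1)%:E *
       Pr [set w | [/\ (forall i, A i (Sbig i w)), F (Z w)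
                   & (forall i, B i (Sbig' i w))]])%E) :
  exists (S : 'I_k -> 'I_n -> Omega -> X * bool) (z : 'I_k -> Omega -> nat),
    (* 1. S^(1), ..., S^(k) are k independent draws from (D_c)^n *)
    iid_Dc Pr D c (fun ij : 'I_k * 'I_n => S ij.1 ij.2) /\
    (* 2. z_1, ..., z_k are k independent draws from Bin(n, eta) *)
    (forall i m, measurable [set w | z i w = m]) /\
    (forall m : 'I_k -> nat,
       Pr [set w | forall i, z i w = m i] = (\prod_i binom_pmf n eta (m i))%:E) /\
    (* 3. almost surely, S^(i) and (S^(i))' differ on at most z_i coordinates,
          where the j-th element of (S^(i))' is (S'_big)_{sigma(i*n+j)} *)
    {ae Pr, forall w, forall i : 'I_k,
       (#|[set j : 'I_n | S i j w != Sbig' (sigma w (block_index i j)) w]%SET| <= z i w)%N}.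
Proof.
pose N := (n * k)%N.
pose b := @block_index n k.
have bb : bijective (fun p : 'I_k * 'I_n => b p.1 p.2) := @block_bij n k.
pose S i j w := Sbig (sigma w (b i j)) w.
pose z i w := cnt b (sigma w) (Z w) i.
have fibSZ : forall p : {perm 'I_(n * k)} * {set 'I_(n * k)},
    measurable [set w | (sigma w, Z w) = p].
  move=> [s B]; rewrite (_ : [set w | _] = [set w | sigma w = s] `&` [set w | Z w = B]).
    exact: measurableI.
  by rewrite eqEsubset; split => w /=; [case=> -> -> | case=> -> ->].
exists S, z; split; last split; last split.
- split.
    move=> [i j] _ Y mY.
    rewrite (_ : _ `&` _ = \bigcup_(s in [set: {perm 'I_(n*k)}])
       ([set w | sigma w = s] `&` ((Sbig (s (b i j))) @^-1` Y))).
      apply: fin_bigcup_measurable; first exact: finite_finset.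
      move=> s _; apply: measurableI => //.
      by have := (Hclean.1 (s (b i j)) measurableT Y mY); rewrite setTI.
    rewrite eqEsubset; split => [w [_ /= HY]|w [s _ [/= Hs HY]]].
      by exists (sigma w) => //; split.
    by split => //; rewrite /S /= Hs.
  move=> A mA.
  have [g gK Kg] := bb.
  pose A' (s : {perm 'I_(n*k)}) p := A (g (s^-1 p)%g).
  have mA' : forall s p, measurable (A' s p) by move=> s p; apply: mA.
  have HE1 : forall s, [set w | forall ij, A ij (S ij.1 ij.2 w)] `&` [set w | sigma w = s] =
      [set w | sigma w = s] `&` [set w | forall p, A' s p (Sbig p w)].
    move=> s; rewrite eqEsubset; split => w /=.
      case=> H Hs; split => // p; rewrite /A'.
      have := H (g (s^-1 p)%g); have E := Kg (s^-1 p)%g; simpl in E.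
      by rewrite /S Hs E permKV.
    case=> Hs H; split => // -[i j]; have := H (s (b i j)).
    by rewrite /A' permK (gK (i, j)) /S Hs.
  have HE2 : forall s, Pr ([set w | sigma w = s] `&` [set w | forall p, A' s p (Sbig p w)]) =
      (((n * k)`!%:R^-1)%:E * (\prod_ij Dc D c (A ij))%:E)%E.
    move=> s.
    have := Hsigma s (A' s) (fun=> setT) setT (mA' s) (fun=> measurableT).
    rewrite (_ : [set w | [/\ _, _, _ & _]] = [set w | sigma w = s] `&` [set w | forall p, A' s p (Sbig p w)]); last first.
      by rewrite eqEsubset; split => w /=; [case | case=> -> H].
    move=> ->; congr (_ * _)%E.
    rewrite (_ : [set w | [/\ _, _ & _]] = [set w | forall p, A' s p (Sbig p w)]); last first.
      by rewrite eqEsubset; split => w /=; [case | ].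
    rewrite Hclean.2 //; congr (_%:E).
    rewrite (reindex (fun ij : 'I_k * 'I_n => s (b ij.1 ij.2))) /=; last first.
      apply: onW_bij; apply: (bij_comp _ bb); by exists (s^-1)%g; [exact: permK | exact: permKV].
    by apply: eq_bigr => -[i j] _; rewrite /A' permK (gK (i, j)).
  rewrite (@part_sum _ _ _ Pr _ sigma); last first.
    move=> s; rewrite (_ : _ `&` [set w | sigma w = s] = [set w | sigma w = s] `&` [set w | forall p, A' s p (Sbig p w)]); last exact: HE1.
    apply: measurableI => //.
    by apply: meas_all => // p; apply: Hclean.1.
  rewrite (eq_bigr (fun s => ((((n * k)`!%:R^-1) * (\prod_ij Dc D c (A ij)))%:E))); last first.
    move=> s _; rewrite (_ : _ `&` [set w | sigma w = s] = [set w | sigma w = s] `&` [set w | forall p, A' s p (Sbig p w)]); last exact: HE1.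
    by rewrite HE2 -EFinM.
  rewrite sumEFin sumr_const card_Sn; congr (_%:E).
  have Nf : ((n * k)`!%:R : R) != 0 by rewrite pnatr_eq0 -lt0n fact_gt0.
  rewrite -mulrnAl -(mulr_natr (_^-1)) mulVf //.
  by rewrite mul1r.
- move=> i m; exact: (meas_fib (fun p => cnt b p.1 p.2 i = m) fibSZ).
- move=> m.
  have mE : measurable [set w | forall i, z i w = m i].
    exact: (meas_fib (fun p => forall i, cnt b p.1 p.2 i = m i) fibSZ).
  pose p B := fine (Pr [set w | Z w = B]).
  have pE : forall B, Pr [set w | Z w = B] = (p B)%:E.
    by move=> B; rewrite fineK // fin_num_measure.
  have HZB : forall s B, Pr ([set w | sigma w = s] `&` [set w | Z w = B]) =
      ((n * k)`!%:R^-1 * p B)%:E.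
    move=> s B.
    have := Hsigma s (fun=> setT) (fun=> setT) [set B] (fun=> measurableT) (fun=> measurableT).
    rewrite (_ : [set w | [/\ _, _, _ & _]] = [set w | sigma w = s] `&` [set w | Z w = B]); last first.
      by rewrite eqEsubset; split => w /=; [case | case=> -> ->].
    move=> ->; rewrite EFinM -pE; congr (_ * Pr _)%E.
    by rewrite eqEsubset; split => w /=; [case | move=> ->].
  have HbinB : forall M, \sum_(B : {set 'I_(n * k)} | #|B| == M) p B = binom_pmf (n * k) eta M.
    move=> M; apply: EFin_inj; rewrite -HZbin.
    rewrite (@part_sum _ _ _ Pr _ Z); last first.
      move=> B; apply: measurableI => //.
      exact: (meas_fib (fun B : {set 'I_(n * k)} => #|B| = M) HZmeas).
    rewrite -sumEFin big_mkcond /=; apply: eq_bigr => B _.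
    case: eqP => HB.
      by rewrite -pE; congr (Pr _); rewrite eqEsubset; split => w /=; [move=> Hw; split => //; rewrite Hw | case].
    rewrite (_ : _ `&` _ = set0) ?measure0 //.
    by rewrite eqEsubset; split => w //= [Hw HwB]; apply: HB; rewrite -HwB.
  rewrite (@part_sum _ _ _ Pr _ (fun w => (sigma w, Z w))); last first.
    by move=> sB; apply: measurableI.
  rewrite (eq_bigr (fun sB => (if cond b m sB.1 sB.2 then (n * k)`!%:R^-1 * p sB.2 else 0)%:E)); last first.
    move=> [s B] _ /=; case: ifP => H.
      rewrite -(HZB s B); congr (Pr _); rewrite eqEsubset; split => w /=.
        by case=> _ [-> ->].
      case=> Hs HB; split; last by rewrite Hs HB.
      move=> i; rewrite /z Hs HB; move/forallP: H => H; exact/eqP.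
    rewrite (_ : _ `&` _ = set0) ?measure0 //.
    rewrite eqEsubset; split => w //= [Hw [Hs HB]]; move: H; rewrite -Hs -HB.
    by move=> /negbT /negP; apply; apply/forallP => i; apply/eqP; apply: Hw.
  rewrite sumEFin; congr (_%:E).
  have Nf : ((n * k)`!%:R : R) != 0 by rewrite pnatr_eq0 -lt0n fact_gt0.
  rewrite -(pair_bigA _ (fun s B => if cond b m s B then (n * k)`!%:R^-1 * p B else 0)) /= exchange_big /=.
  pose f M := ((if M == \sum_i m i then \prod_i 'C(n, m i) else 0)%N%:R / ('C(n * k, M))%:R : R).
  transitivity (\sum_(B : {set 'I_(n * k)}) f #|B| * p B).
    apply: eq_bigr => B _.
    rewrite -big_mkcond sumr_const.
    rewrite (_ : #|_| = cc b m B); last by apply: eq_card => s; rewrite inE.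
    have Hc := cc_formula bb m B; rewrite !card_ord card_Sn in Hc.
    have Cn0 : ('C(n * k, #|B|)%:R : R) != 0.
      by rewrite pnatr_eq0 -lt0n bin_gt0 -[X in (_ <= X)%N](card_ord (n * k)) max_card.
    rewrite -[_ *+ cc b m B]mulr_natr -[(cc b m B)%:R](mulfK Cn0) -natrM Hc natrM /f.
    field.
    by rewrite Cn0 Nf.
  rewrite sum_by_card card_ord.
  rewrite (eq_bigr (fun M : 'I_(n * k).+1 => f M * binom_pmf (n * k) eta M)); last first.
    move=> M _; congr (_ * _); exact: HbinB.
  exact: final_alg.
- apply: aeW => w i; rewrite /z /cnt; apply: subset_leq_card; apply/fintype.subsetP => j.
  rewrite !inE; apply: contraR => H; by rewrite /S HS'Z.
Qed.
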